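(* Let $A\otimes B$ be a two-qubit Pauli operator with $A,B\in\{X,Y,Z\}$, and let $\rho$ be a valid two-qubit density matrix of the form $$\rho=\tfrac14\Big(I\otimes I+\sum_{q}c_q\,q\Big),\qquad c_q\in\mathbb{R}.$$ Here $q$ ranges over the five operators $A\otimes B$ and $A'\otimes B'$ with $A'\in\{X,Y,Z\}\setminus\{A\}$ and $B'\in\{X,Y,Z\}\setminus\{B\}$. Equivalently, $\rho$ is a Group 2 $X$-state with maximally-mixed subsystems, or a Mermin-state $\mathcal{Q}_i$, $i=1,\dots,9$, with all local coefficients zero. Let $\mathcal{M}(\rho)$ be the sum of the two largest eigenvalues of $\beta^T\beta$, where $\beta$ is the $3\times3$ real matrix with entries $\beta_{ij}=\operatorname{Tr}(\rho\,\sigma_i\otimes\sigma_j)$, $\sigma_1=X,\sigma_2=Y,\sigma_3=Z$. Then $\mathcal{M}(\rho)=2$ (i.e. $\rho$ violates the Bell (CHSH) inequality maximally) if and only if $\rho$ is pure, i.e. $\operatorname{Tr}(\rho^2)=1$.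
   Context: Valid means $\rho$ is Hermitian, of trace one and positive semidefinite. By the Horodecki criterion, a two-qubit state violates the Bell (CHSH) inequality iff $\mathcal{M}(\rho)>1$; maximal violation corresponds to the maximal possible value $\mathcal{M}(\rho)=2$. *)

(* Defs.v *)
From HB Require Import structures.
From mathcomp Require Import all_boot all_order all_algebra.
From mathcomp Require Import complex mxtens.
Set Implicit Arguments. Unset Strict Implicit. Unset Printing Implicit Defensive.
Import Order.TTheory GRing.Theory Num.Theory.
Local Open Scope ring_scope.
Local Open Scope complex_scope.

Section Qubits.
Variable R : rcfType.
Local Notation C := R[i].

Definition pauliX : 'M[C]_2 := \matrix_(a, b) (if a == b then 0 else 1).
Definition pauliY : 'M[C]_2 :=
  \matrix_(a, b) (if a == b then 0 else if val a == 0%N then - 'i else 'i).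
Definition pauliZ : 'M[C]_2 :=
  \matrix_(a, b) (if a == b then (if val a == 0%N then 1 else -1) else 0).

(* sigma_1 = X, sigma_2 = Y, sigma_3 = Z, indexed by 'I_3 = {0,1,2} *)
Definition sigma (k : 'I_3) : 'M[C]_2 :=
  match val k with 0%N => pauliX | 1%N => pauliY | _ => pauliZ end.

Definition adjmx m n (M : 'M[C]_(m, n)) : 'M[C]_(n, m) := (map_mx (@conjc R) M)^T.

Definition density_matrix n (rho : 'M[C]_n) : Prop :=
  [/\ adjmx rho = rho, \tr rho = 1 &
      forall v : 'cV[C]_n, 0 <= (adjmx v *m rho *m v) 0 0].

(* correlation matrix beta_ij = Tr(rho sigma_i (x) sigma_j) (a real number for
   Hermitian rho; we take its real part to view beta as a real 3x3 matrix) *)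
Definition corr_mx (rho : 'M[C]_(2 * 2)) : 'M[R]_3 :=
  \matrix_(i, j) @complex.Re R (\tr (rho *m (sigma i *t sigma j))).

(* "M(rho) = m": m is the sum of the two largest eigenvalues (with multiplicity)
   of beta^T beta, i.e. char_poly(beta^T beta) = (X-l1)(X-l2)(X-l3) with
   l1 >= l2 >= l3 and m = l1 + l2. *)
Definition horodecki_M_is (rho : 'M[C]_(2 * 2)) (m : R) : Prop :=
  exists l1 l2 l3 : R,
    [/\ l3 <= l2, l2 <= l1,
        char_poly ((corr_mx rho)^T *m corr_mx rho)
          = ('X - l1%:P) * ('X - l2%:P) * ('X - l3%:P)
      & m = l1 + l2].

End Qubits.
Arguments sigma {R} k.
Arguments pauliX {R}.
Arguments pauliY {R}.
Arguments pauliZ {R}.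

(* Main.v *)
Require Import Defs.
From HB Require Import structures.
From mathcomp Require Import all_boot all_order all_algebra.
From mathcomp Require Import complex mxtens.
From mathcomp Require Import ring lra.
Import Order.TTheory GRing.Theory Num.Theory.
Local Open Scope ring_scope.
Local Open Scope complex_scope.

(* Proof strategy: rewrite rho as 1/4 (I + sum_{ab} w_ab sigma_a (x) sigma_b),
   compute the correlation matrix (= w) and the purity, extract the positivity
   constraints |z| <= 1 + c0, |w| <= 1 - c0 with explicit test vectors (case analysis
   over A, B), and conclude with real-closed-field algebra. *)

Set Implicit Arguments. Unset Strict Implicit.
Notation i0 := (ord0 : 'I_3).
Notation i1 := (lift (ord0 : 'I_3) (ord0 : 'I_2)).
Notation i2 := (lift (ord0 : 'I_3) (lift (ord0 : 'I_2) (ord0 : 'I_1))).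
Section Main.
Variable R : rcfType.
Local Notation C := R[i].
Implicit Types x y : C.
Lemma ReD x y : complex.Re (x + y) = complex.Re x + complex.Re y. Proof. by move: x y => [a b] [c d]; reflexivity. Qed.
Lemma ImD x y : complex.Im (x + y) = complex.Im x + complex.Im y. Proof. by move: x y => [a b] [c d]; reflexivity. Qed.
Lemma ReN x : complex.Re (- x) = - complex.Re x. Proof. by move: x => [a b]; reflexivity. Qed.
Lemma ImN x : complex.Im (- x) = - complex.Im x. Proof. by move: x => [a b]; reflexivity. Qed.
Lemma ReM x y : complex.Re (x * y) = complex.Re x * complex.Re y - complex.Im x * complex.Im y. Proof. by move: x y => [a b] [c d]; reflexivity. Qed.
Lemma ImM x y : complex.Im (x * y) = complex.Re x * complex.Im y + complex.Im x * complex.Re y. Proof. by move: x y => [a b] [c d] /=; rewrite addrC. Qed.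
Lemma ReJ x : complex.Re (x^*) = complex.Re x. Proof. by move: x => [a b]; reflexivity. Qed.
Lemma ImJ x : complex.Im (x^*) = - complex.Im x. Proof. by move: x => [a b]; reflexivity. Qed.
Lemma ReC (a : R) : complex.Re (a%:C) = a. Proof. by []. Qed.
Lemma ImC (a : R) : complex.Im (a%:C) = 0. Proof. by []. Qed.
Lemma ReL (a b : R) : complex.Re (a +i* b) = a. Proof. by []. Qed.
Lemma ImL (a b : R) : complex.Im (a +i* b) = b. Proof. by []. Qed.
Lemma Re0 : complex.Re (0 : C) = 0. Proof. by []. Qed.
Lemma Im0 : complex.Im (0 : C) = 0. Proof. by []. Qed.
Lemma Re1 : complex.Re (1 : C) = 1. Proof. by []. Qed.
Lemma Im1 : complex.Im (1 : C) = 0. Proof. by []. Qed.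
Lemma ReMn x n : complex.Re (x *+ n) = complex.Re x *+ n.
Proof. by elim: n => [|n IH]; rewrite ?mulr0n // !mulrS ReD IH. Qed.
Lemma ImMn x n : complex.Im (x *+ n) = complex.Im x *+ n.
Proof. by elim: n => [|n IH]; rewrite ?mulr0n // !mulrS ImD IH. Qed.
Lemma Re_sum I (r : seq I) (P : pred I) (F : I -> C) :
  complex.Re (\sum_(i <- r | P i) F i) = \sum_(i <- r | P i) complex.Re (F i).
Proof. exact: (big_morph _ ReD Re0). Qed.

Lemma Im_sum I (r : seq I) (P : pred I) (F : I -> C) :
  complex.Im (\sum_(i <- r | P i) F i) = \sum_(i <- r | P i) complex.Im (F i).
Proof. exact: (big_morph _ ImD Im0). Qed.
Definition ReE := (ReD, ImD, ReN, ImN, ReM, ImM, ReJ, ImJ, ReC, ImC, ReL, ImL, Re0, Im0, Re1, Im1, ReMn, ImMn).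

Lemma inv4C : (4%:R : C)^-1 = ((4%:R : R)^-1)%:C. Proof. by rewrite fmorphV rmorph_nat. Qed.

Lemma complexP (x y : C) : @eq R (complex.Re x) (complex.Re y) -> @eq R (complex.Im x) (complex.Im y) -> x = y.
Proof. by move: x y => [a b] [c d] /= -> ->. Qed.
Ltac cplx := apply: complexP; rewrite !ReE ?oppr0; ring.


Lemma ord3_cases (A : 'I_3) : A = i0 \/ A = i1 \/ A = i2.
Proof.
case: A => [[|[|[|m]]] H].
- by left; apply/val_inj.
- by right; left; apply/val_inj.
- by right; right; apply/val_inj.
- by [].
Qed.

Definition Pm (a b : 'I_3) : 'M[C]_(2*2) := sigma a *t sigma b.

Lemma tr_tens (M N : 'M[C]_2) : \tr (M *t N) = \tr M * \tr N.
Proof. by rewrite /mxtrace mulr_sum; apply: eq_bigr => k _; rewrite mxE. Qed.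

Lemma tr_sig_prod a b : \tr (sigma a *m sigma b) = ((a == b)%:R *+ 2 : C).
Proof.
by case: (ord3_cases a) => [->|[->|->]]; case: (ord3_cases b) => [->|[->|->]];
  rewrite /mxtrace /sigma !big_ord_recl !big_ord0 /= !mxE !big_ord_recl !big_ord0 /= !mxE /=; cplx.
Qed.

Lemma tr_sig a : \tr (sigma a) = 0 :> C.
Proof.
by case: (ord3_cases a) => [->|[->|->]]; rewrite /mxtrace /sigma !big_ord_recl !big_ord0 /= !mxE /=; cplx.
Qed.

Lemma trPP a b i j : \tr (Pm a b *m Pm i j) = ((a == i)%:R *+ 2) * ((b == j)%:R *+ 2).
Proof. by rewrite /Pm tensmx_mul tr_tens !tr_sig_prod. Qed.

Lemma trP a b : \tr (Pm a b) = 0.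
Proof. by rewrite /Pm tr_tens tr_sig mul0r. Qed.


Lemma C0 : (0 : R)%:C = 0 :> C. Proof. by []. Qed.

Definition wf (A B : 'I_3) (c0 : R) (c : 'I_3 -> 'I_3 -> R) (a b : 'I_3) : R :=
  if (a == A) && (b == B) then c0 else if (a != A) && (b != B) then c a b else 0.

Lemma G1 A B c0 c (Q : 'I_3 -> 'I_3 -> 'M[C]_(2*2)) :
  c0%:C *: Q A B + \sum_(a < 3 | a != A) \sum_(b < 3 | b != B) (c a b)%:C *: Q a b
  = \sum_a \sum_b (wf A B c0 c a b)%:C *: Q a b.
Proof.
case: (ord3_cases A) => [->|[->|->]]; case: (ord3_cases B) => [->|[->|->]];
rewrite /wf; do 4! rewrite ?big_mkcond ?big_ord_recl ?big_ord0 /=; rewrite ?C0 ?scale0r;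
apply/matrixP => i j; rewrite !mxE; ring.
Qed.

Lemma sAl (a : C) (M N : 'M[C]_(2*2)) : (a *: M) *m N = a *: (M *m N).
Proof. by rewrite scalemxAl. Qed.
Lemma sAr (a : C) (M N : 'M[C]_(2*2)) : M *m (a *: N) = a *: (M *m N).
Proof. by rewrite scalemxAr. Qed.
Lemma trZ (a : C) (M : 'M[C]_(2*2)) : \tr (a *: M) = a * \tr M.
Proof. by rewrite mxtraceZ. Qed.

Lemma tr_sum I (r : seq I) (P : pred I) (F : I -> 'M[C]_(2*2)) :
  \tr (\sum_(i <- r | P i) F i) = \sum_(i <- r | P i) \tr (F i).
Proof. exact: raddf_sum. Qed.

Definition rhoW (W : 'I_3 -> 'I_3 -> R) : 'M[C]_(2*2) :=
  4%:R^-1 *: (1%:M + \sum_a \sum_b (W a b)%:C *: Pm a b).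

Lemma delta2 (F : 'I_3 -> 'I_3 -> C) i j :
  \sum_a \sum_b F a b * (((a == i)%:R *+ 2) * ((b == j)%:R *+ 2)) = F i j *+ 4.
Proof.
by case: (ord3_cases i) => [->|[->|->]]; case: (ord3_cases j) => [->|[->|->]];
  rewrite !big_ord_recl !big_ord0 /=; ring.
Qed.

Lemma trW W i j : \tr (rhoW W *m Pm i j) = (W i j)%:C.
Proof.
rewrite /rhoW sAl trZ mulmxDl mul1mx mxtraceD trP add0r.
rewrite mulmx_suml tr_sum.
under eq_bigr => a _.
  rewrite mulmx_suml tr_sum.
  under eq_bigr => b _ do rewrite sAl trZ trPP.
  over.
rewrite (delta2 (fun a b => (W a b)%:C)) inv4C.
by apply: complexP; rewrite !ReE ?oppr0 /=; field.
Qed.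

End Main.
Arguments Pm {R}.
Arguments complexP {R}.

Section M3.
Variable R : rcfType.
Local Notation C := R[i].

Lemma Rescale (a : R) (x : C) : complex.Re (a%:C * x) = a * complex.Re x.
Proof. by case: x => u v /=; rewrite mul0r subr0. Qed.

Lemma Re_sum2 (F : 'I_3 -> 'I_3 -> C) :
  complex.Re (\sum_a \sum_b F a b) = \sum_a \sum_b complex.Re (F a b).
Proof. by rewrite Re_sum; apply: eq_bigr => a _; rewrite Re_sum. Qed.

Lemma Im_sum2 (F : 'I_3 -> 'I_3 -> C) :
  complex.Im (\sum_a \sum_b F a b) = \sum_a \sum_b complex.Im (F a b).
Proof. by rewrite Im_sum; apply: eq_bigr => a _; rewrite Im_sum. Qed.

Lemma corrW (W : 'I_3 -> 'I_3 -> R) rho : rho = rhoW W -> corr_mx rho = \matrix_(i,j) W i j.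
Proof.
move=> ->; apply/matrixP => i j; rewrite !mxE.
by change (sigma i *t sigma j) with (@Pm R i j); rewrite trW.
Qed.

Lemma purW (W : 'I_3 -> 'I_3 -> R) rho : rho = rhoW W -> \tr rho = 1 ->
  \tr (rho *m rho) = (4%:R^-1 * (1 + \sum_a \sum_b W a b ^+ 2))%:C.
Proof.
move=> E Htr.
have T : forall a b, \tr (rho *m @Pm R a b) = (W a b)%:C by move=> a b; rewrite E trW.
rewrite {2}E /rhoW sAr trZ mulmxDr mulmx1 mxtraceD Htr mulmx_sumr tr_sum.
under eq_bigr => a _.
  rewrite mulmx_sumr tr_sum.
  under eq_bigr => b _ do rewrite sAr trZ T.
  over.
apply: complexP; rewrite inv4C !ReE ?Re_sum2 ?Im_sum2 /=.
    rewrite (eq_bigr (fun a => \sum_b W a b ^+ 2)); last by move=> a _; apply: eq_bigr => b _; ring.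
    ring.
  rewrite (eq_bigr (fun a => \sum_(b < 3) (0:R))); last by move=> a _; apply: eq_bigr => b _; ring.
  rewrite big1 //; last by move=> a _; rewrite big1. ring.
Qed.

Definition qf (v : 'cV[C]_(2*2)) (M : 'M[C]_(2*2)) : C := (adjmx v *m M *m v) 0 0.
Lemma qfZ a v M : qf v (a *: M) = a * qf v M.
Proof. by rewrite /qf -scalemxAr -scalemxAl mxE. Qed.
Lemma qfD v M N : qf v (M + N) = qf v M + qf v N.
Proof. by rewrite /qf mulmxDr mulmxDl mxE. Qed.
Lemma qf_sum v I (r : seq I) (P : pred I) (F : I -> 'M[C]_(2*2)) :
  qf v (\sum_(i <- r | P i) F i) = \sum_(i <- r | P i) qf v (F i).
Proof. by rewrite /qf mulmx_sumr mulmx_suml summxE. Qed.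

Lemma qfW (W : 'I_3 -> 'I_3 -> R) rho v : rho = rhoW W ->
  complex.Re (qf v rho) = 4%:R^-1 * (complex.Re (qf v 1%:M)
     + \sum_a \sum_b W a b * complex.Re (qf v (Pm a b))).
Proof.
move=> ->; rewrite /rhoW qfZ qfD qf_sum inv4C Rescale ReD Re_sum; congr (_ * (_ + _)).
apply: eq_bigr => a _; rewrite qf_sum Re_sum; apply: eq_bigr => b _.
by rewrite qfZ Rescale.
Qed.

Definition vec4 (x0 y0 x1 y1 x2 y2 x3 y3 : R) : 'cV[C]_(2*2) :=
  \col_i (match nat_of_ord i with 0%N => x0 +i* y0 | 1%N => x1 +i* y1
         | 2%N => x2 +i* y2 | _ => x3 +i* y3 end).

Lemma qf1 x0 y0 x1 y1 x2 y2 x3 y3 :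
  complex.Re (qf (vec4 x0 y0 x1 y1 x2 y2 x3 y3) 1%:M) =
  x0 ^+ 2 + y0 ^+ 2 + x1 ^+ 2 + y1 ^+ 2 + x2 ^+ 2 + y2 ^+ 2 + x3 ^+ 2 + y3 ^+ 2.
Proof.
rewrite /qf /vec4 /adjmx !mxE !big_ord_recl !big_ord0 /= !mxE !big_ord_recl !big_ord0 /= !mxE /=.
rewrite ?ReE ?oppr0; ring.
Qed.

Definition QF (a b : 'I_3) (x0 y0 x1 y1 x2 y2 x3 y3 : R) : R :=
  match nat_of_ord a with
  | 0%N => match nat_of_ord b with 0%N => ((2%:R * x0 * x3) + (2%:R * x1 * x2) + (2%:R * y0 * y3) + (2%:R * y1 * y2)) | 1%N => ((2%:R * x0 * y3) - (2%:R * x1 * y2) + (2%:R * x2 * y1) - (2%:R * x3 * y0)) | _ => ((2%:R * x0 * x2) - (2%:R * x1 * x3) + (2%:R * y0 * y2) - (2%:R * y1 * y3)) end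
  | 1%N => match nat_of_ord b with 0%N => ((2%:R * x0 * y3) + (2%:R * x1 * y2) - (2%:R * x2 * y1) - (2%:R * x3 * y0)) | 1%N => (- (2%:R * x0 * x3) + (2%:R * x1 * x2) - (2%:R * y0 * y3) + (2%:R * y1 * y2)) | _ => ((2%:R * x0 * y2) - (2%:R * x1 * y3) - (2%:R * x2 * y0) + (2%:R * x3 * y1)) end
  | _ => match nat_of_ord b with 0%N => ((2%:R * x0 * x1) - (2%:R * x2 * x3) + (2%:R * y0 * y1) - (2%:R * y2 * y3)) | 1%N => ((2%:R * x0 * y1) - (2%:R * x1 * y0) - (2%:R * x2 * y3) + (2%:R * x3 * y2)) | _ => ((x0 * x0) - (x1 * x1) - (x2 * x2) + (x3 * x3) + (y0 * y0) - (y1 * y1) - (y2 * y2) + (y3 * y3)) end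
  end.

Lemma qfP a b x0 y0 x1 y1 x2 y2 x3 y3 :
  complex.Re (qf (vec4 x0 y0 x1 y1 x2 y2 x3 y3) (Pm a b)) = QF a b x0 y0 x1 y1 x2 y2 x3 y3.
Proof.
by case: (ord3_cases a) => [->|[->|->]]; case: (ord3_cases b) => [->|[->|->]];
rewrite /qf /vec4 /adjmx /Pm /sigma !mxE !big_ord_recl !big_ord0 /= !mxE !big_ord_recl !big_ord0 /= !mxE /=;
rewrite /QF /= ?ReE ?oppr0; ring.
Qed.

Lemma qfW4 (W : 'I_3 -> 'I_3 -> R) rho v : rho = rhoW W ->
  4%:R * complex.Re (qf v rho) = complex.Re (qf v 1%:M)
     + \sum_a \sum_b W a b * complex.Re (qf v (Pm a b)).
Proof. by move=> E; rewrite (qfW v E) mulrA mulfV ?mul1r // pnatr_eq0. Qed.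

Lemma sum9 (F : 'I_3 -> 'I_3 -> R) : \sum_a \sum_b F a b = F i0 i0 + F i0 i1 + F i0 i2 + F i1 i0 + F i1 i1 + F i1 i2 + F i2 i0 + F i2 i1 + F i2 i2.
Proof. by rewrite !big_ord_recl !big_ord0 !addr0 !addrA. Qed.
Lemma sum3 (F : 'I_3 -> R) : \sum_a F a = F i0 + F i1 + F i2.
Proof. by rewrite !big_ord_recl !big_ord0 !addr0 !addrA. Qed.

Lemma qfW4x (W : 'I_3 -> 'I_3 -> R) rho x0 y0 x1 y1 x2 y2 x3 y3 : rho = rhoW W ->
  4%:R * complex.Re (qf (vec4 x0 y0 x1 y1 x2 y2 x3 y3) rho) =
  x0 ^+ 2 + y0 ^+ 2 + x1 ^+ 2 + y1 ^+ 2 + x2 ^+ 2 + y2 ^+ 2 + x3 ^+ 2 + y3 ^+ 2 +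
  (W i0 i0 * QF i0 i0 x0 y0 x1 y1 x2 y2 x3 y3 + W i0 i1 * QF i0 i1 x0 y0 x1 y1 x2 y2 x3 y3 + W i0 i2 * QF i0 i2 x0 y0 x1 y1 x2 y2 x3 y3 + W i1 i0 * QF i1 i0 x0 y0 x1 y1 x2 y2 x3 y3 + W i1 i1 * QF i1 i1 x0 y0 x1 y1 x2 y2 x3 y3 + W i1 i2 * QF i1 i2 x0 y0 x1 y1 x2 y2 x3 y3 + W i2 i0 * QF i2 i0 x0 y0 x1 y1 x2 y2 x3 y3 + W i2 i1 * QF i2 i1 x0 y0 x1 y1 x2 y2 x3 y3 + W i2 i2 * QF i2 i2 x0 y0 x1 y1 x2 y2 x3 y3).
Proof.
move=> E; rewrite (qfW4 _ E) qf1; congr (_ + _).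
rewrite (sum9 (fun a b => W a b * complex.Re (qf (vec4 x0 y0 x1 y1 x2 y2 x3 y3) (Pm a b)))) /=.
congr (_ + _ + _ + _ + _ + _ + _ + _ + _); congr (_ * _); apply: qfP.
Qed.
End M3.

Set Implicit Arguments. Unset Strict Implicit.
Section Core.
Variable R : rcfType.

Lemma block_bound (al N k : R) (F : R -> R -> R) : 0 < k -> 0 <= N ->
  (forall t s, F t s = k * (al * s ^+ 2 - 2%:R * N * t * s + al * N * t ^+ 2)) ->
  (forall t s, 0 <= F t s) -> 0 <= al /\ N <= al ^+ 2.
Proof.
move=> k0 N0 EF PF.
have h1 := PF 0 1; rewrite EF in h1.
have h2 := PF 1 al; rewrite EF in h2.
have h3 := PF 1 1; rewrite EF in h3.
have al0 : 0 <= al by nra.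
split => //.
case: (eqVneq al 0) => [E|NE].
  rewrite E in h3 *; nra.
have alp : 0 < al by rewrite lt_def NE.
have kal : 0 < k * al by apply: mulr_gt0.
nra.
Qed.

Lemma coreA (c0 P M : R) : 0 <= P -> 0 <= M -> 0 <= 1 + c0 -> 0 <= 1 - c0 ->
  P <= (1 + c0) ^+ 2 -> M <= (1 - c0) ^+ 2 -> 2%:R * c0 ^+ 2 + P + M = 6%:R ->
  [/\ c0 ^+ 2 = 1, P + M = 4%:R & (P - M) ^+ 2 = 16%:R].
Proof.
move=> P0 M0 a0 b0 HP HM HS.
have c1 : c0 ^+ 2 <= 1 by nra.
have c2 : c0 ^+ 2 = 1 by apply/eqP; rewrite eq_le c1 /=; nra.
have EP : P = (1 + c0) ^+ 2 by nra.
have EM : M = (1 - c0) ^+ 2 by nra.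
split => //; first by nra.
rewrite EP EM; nra.
Qed.

Lemma sqrt_le (P w : R) : 0 <= P -> 0 <= w -> P <= w ^+ 2 -> Num.sqrt P <= w.
Proof.
move=> P0 w0 H.
have s0 := sqrtr_ge0 P; have s2 := sqr_sqrtr P0.
nra.
Qed.

Lemma pos3 (a b c : R) : 0 < a -> 0 < b -> 0 < c -> 0 < a * b * c.
Proof. by move=> ha hb hc; apply: mulr_gt0 => //; apply: mulr_gt0. Qed.

Lemma coreB (c0 P M l1 l2 l3 : R) : 0 <= P -> 0 <= M -> 0 <= 1 + c0 -> 0 <= 1 - c0 ->
  P <= (1 + c0) ^+ 2 -> M <= (1 - c0) ^+ 2 -> l3 <= l2 -> l2 <= l1 ->
  (forall x, 16%:R * ((x - l1) * (x - l2) * (x - l3)) =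
     (x - c0 ^+ 2) * (16%:R * x ^+ 2 - 8%:R * (P + M) * x + (P - M) ^+ 2)) ->
  l1 + l2 = 2%:R -> 2%:R * c0 ^+ 2 + P + M = 6%:R.
Proof.
move=> P0 M0 a0 b0 HP HM l32 l21 Hid Hsum.
have u0 := sqrtr_ge0 P; have v0 := sqrtr_ge0 M.
have uP := sqr_sqrtr P0; have vM := sqr_sqrtr M0.
have ub := @sqrt_le P _ P0 a0 HP; have vb := @sqrt_le M _ M0 b0 HM.
move: (Num.sqrt P) (Num.sqrt M) u0 v0 uP vM ub vb => u v u0 v0 uP vM ub vb.
subst P M.
have Hid2 : forall x, 16%:R * ((x - l1) * (x - l2) * (x - l3)) =
   (x - c0 ^+ 2) * (4%:R * x - (u + v) ^+ 2) * (4%:R * x - (u - v) ^+ 2).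
  by move=> x; rewrite Hid; ring.
have c1 : c0 ^+ 2 <= 1 by nra.
have p1 : (u + v) ^+ 2 <= 4%:R by nra.
have q1 : (u - v) ^+ 2 <= 4%:R by nra.
have l1le : l1 <= 1.
  rewrite leNgt; apply/negP => l1g.
  have := Hid2 l1; rewrite subrr !mul0r mulr0 => /esym /eqP.
  apply/negP; rewrite gt_eqF //; apply: pos3; nra.
have L1 : l1 = 1 by lra.
have L2 : l2 = 1 by lra.
subst l1 l2.
have e0 := Hid2 0; have e1 := Hid2 1; have e2 := Hid2 (-1); have e3 := Hid2 2%:R.
set b1 := 1 - c0 ^+ 2; set b2 := 4%:R - (u + v) ^+ 2; set b3 := 4%:R - (u - v) ^+ 2.
have b10 : 0 <= b1 by rewrite /b1; lra.
have b20 : 0 <= b2 by rewrite /b2; lra.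
have b30 : 0 <= b3 by rewrite /b3; lra.
have pr0 : b1 * b2 * b3 = 0 by rewrite /b1 /b2 /b3; nra.
have sp0 : 4%:R * b1 * b2 + 4%:R * b1 * b3 + b2 * b3 = 0 by rewrite /b1 /b2 /b3; nra.
have s12 : b1 * b2 = 0 by nra.
have s13 : b1 * b3 = 0 by nra.
have s23 : b2 * b3 = 0 by nra.
have uv0 : 0 <= u * v by apply: mulr_ge0.
have uvle : u * v <= b1 by rewrite /b1; nra.
have d : b3 - b2 = 4%:R * (u * v) by rewrite /b2 /b3; ring.
have B1 : b1 = 0.
  move/eqP: s12; rewrite mulf_eq0 => /orP [/eqP //|/eqP b2z].
  move/eqP: s13; rewrite mulf_eq0 => /orP [/eqP //|/eqP b3z].
  have uvz : u * v = 0 by lra.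
  have s2 : (u + v) ^+ 2 = 4%:R by move: b2z; rewrite /b2; lra.
  have s3 : u + v = 2%:R by nra.
  have Eu : u = 1 + c0 by lra.
  have Ev : v = 1 - c0 by lra.
  by rewrite /b1 -uvz Eu Ev; ring.
have uvz : u * v = 0 by lra.
have B23 : b2 = b3 by lra.
have B2 : b2 = 0 by move: s23; rewrite -B23; nra.
move: B1 B2 B23; rewrite /b1 /b2 /b3 => B1 B2 B3.
nra.
Qed.

Lemma orth2 (a b c d : R) : a ^+ 2 + b ^+ 2 + c ^+ 2 + d ^+ 2 = 2%:R -> (a * d - b * c) ^+ 2 = 1 ->
  [/\ a ^+ 2 + c ^+ 2 = 1, b ^+ 2 + d ^+ 2 = 1 & a * b + c * d = 0].
Proof.
move=> HT HD.
have L : (a ^+ 2 + c ^+ 2) * (b ^+ 2 + d ^+ 2) = (a * b + c * d) ^+ 2 + (a * d - b * c) ^+ 2 by ring.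
have HT' : (a ^+ 2 + c ^+ 2) + (b ^+ 2 + d ^+ 2) = 2%:R by rewrite -HT; ring.
move: L; rewrite HD.
move: (a ^+ 2 + c ^+ 2) (b ^+ 2 + d ^+ 2) (a * b + c * d) HT' => p q r HT' L.
have Hq : q = 2%:R - p by rewrite -HT'; ring.
rewrite Hq in L *.
have h : r ^+ 2 + (p - 1) ^+ 2 = 0.
  have -> : r ^+ 2 + (p - 1) ^+ 2 = (r ^+ 2 + 1) - p * (2%:R - p) by ring.
  by rewrite L subrr.
have g1 := sqr_ge0 r; have g2 := sqr_ge0 (p - 1).
have r0 : r ^+ 2 = 0 by lra.
have p1 : p = 1.
  have : (p - 1) ^+ 2 = 0 by lra.
  by move/eqP; rewrite sqrf_eq0 subr_eq0 => /eqP.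
split; [by [] | lra | by move/eqP: r0; rewrite sqrf_eq0 => /eqP].
Qed.
End Core.

Set Implicit Arguments. Unset Strict Implicit.
Section D.
Variable R : rcfType.
Lemma in3_0 : (inord 0 : 'I_3) = i0. Proof. by apply/val_inj; rewrite /= inordK. Qed.
Lemma in3_1 : (inord 1 : 'I_3) = i1. Proof. by apply/val_inj; rewrite /= inordK. Qed.
Lemma in3_2 : (inord 2 : 'I_3) = i2. Proof. by apply/val_inj; rewrite /= inordK. Qed.
Definition cn (c : 'I_3 -> 'I_3 -> R) (i j : nat) := c (inord i) (inord j).
Lemma cE (c : 'I_3 -> 'I_3 -> R) x y : c x y = cn c (val x) (val y).
Proof. by rewrite /cn !inord_val. Qed.
Definition mn (M : 'M[R]_3) (i j : nat) := M (inord i) (inord j).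
Lemma Mn (M : 'M[R]_3) x y : M x y = mn M (val x) (val y).
Proof. by rewrite /mn !inord_val. Qed.

Lemma det3 (M : 'M[R]_3) : \det M =
  mn M 0 0 * (mn M 1 1 * mn M 2 2 - mn M 1 2 * mn M 2 1)
  - mn M 0 1 * (mn M 1 0 * mn M 2 2 - mn M 1 2 * mn M 2 0)
  + mn M 0 2 * (mn M 1 0 * mn M 2 1 - mn M 1 1 * mn M 2 0).
Proof.
rewrite (expand_det_row _ ord0) !big_ord_recl big_ord0 /cofactor.
rewrite !(expand_det_row _ ord0) !big_ord_recl !big_ord0 /cofactor !det_mx11 !mxE /=.
rewrite !Mn /=.
ring.
Qed.

Lemma char_horner (S : 'M[R]_3) x : (char_poly S).[x] = \det (x%:M - S).
Proof.
rewrite /char_poly -horner_evalE -det_map_mx; congr (\det _).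
apply/matrixP => i j; rewrite !mxE /= horner_evalE !hornerE; case: (i == j); by rewrite ?mulr1n ?mulr0n ?hornerX ?horner0.
Qed.
End D.

Section C6.
Variable R : rcfType.
Local Notation C := R[i].

Lemma sqs (x y : R) : 0 <= x ^+ 2 + y ^+ 2.
Proof. by rewrite addr_ge0 // sqr_ge0. Qed.

Lemma block_from_psd (rho : 'M[C]_(2*2)) (vt : R -> R -> 'cV[C]_(2*2)) (al N k : R) :
  (forall v, 0 <= qf v rho) -> 0 < k -> 0 <= N ->
  (forall t s, 4%:R * complex.Re (qf (vt t s) rho) = k * (al * s ^+ 2 - 2%:R * N * t * s + al * N * t ^+ 2)) ->
  0 <= al /\ N <= al ^+ 2.
Proof.
move=> H k0 N0 E; apply: (@block_bound _ al N k (fun t s => 4%:R * complex.Re (qf (vt t s) rho))) => // t s /=.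
apply: mulr_ge0 => //; have := H (vt t s); rewrite lecE => /andP [_]; done.
Qed.

Definition Smx (W : 'I_3 -> 'I_3 -> R) : 'M[R]_3 := (\matrix_(i,j) W i j)^T *m \matrix_(i,j) W i j.

Definition facts (W : 'I_3 -> 'I_3 -> R) (c0 P M : R) : Prop :=
  [/\ [/\ 0 <= P, 0 <= M, 0 <= 1 + c0, 0 <= 1 - c0 & P <= (1 + c0) ^+ 2],
      M <= (1 - c0) ^+ 2,
      2%:R * (\sum_a \sum_b W a b ^+ 2) = 2%:R * c0 ^+ 2 + P + M,
      (forall x, 16%:R * \det (x%:M - Smx W) = (x - c0 ^+ 2) * (16%:R * x ^+ 2 - 8%:R * (P + M) * x + (P - M) ^+ 2)) &
      (c0 ^+ 2 = 1 -> P + M = 4%:R -> (P - M) ^+ 2 = 16%:R -> Smx W = 1%:M)].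

Lemma case_0_0 c0 (c : 'I_3 -> 'I_3 -> R) rho :
  rho = rhoW (wf i0 i0 c0 c) -> (forall v, 0 <= qf v rho) ->
  facts (wf i0 i0 c0 c) c0 ((- (cn c 1 1) + (cn c 2 2)) ^+ 2 + (- (cn c 1 2) - (cn c 2 1)) ^+ 2) (((cn c 1 1) + (cn c 2 2)) ^+ 2 + (- (cn c 1 2) + (cn c 2 1)) ^+ 2).
Proof.
move=> E H.
have [h1 h2] : 0 <= 1 + c0 /\ ((- (cn c 1 1) + (cn c 2 2)) ^+ 2 + (- (cn c 1 2) - (cn c 2 1)) ^+ 2) <= (1 + c0) ^+ 2.
  apply: (@block_from_psd rho (fun t s => vec4 ((cn c 1 1 * t) - (cn c 2 2 * t) + (s)) ((cn c 1 2 * t) + (cn c 2 1 * t)) (- (cn c 1 1 * t) + (cn c 2 2 * t) + (s)) (- (cn c 1 2 * t) - (cn c 2 1 * t)) (- (cn c 1 1 * t) + (cn c 2 2 * t) + (s)) (- (cn c 1 2 * t) - (cn c 2 1 * t)) ((cn c 1 1 * t) - (cn c 2 2 * t) + (s)) ((cn c 1 2 * t) + (cn c 2 1 * t))) _ _ 4%:R H (ltr0Sn _ _) (sqs _ _)).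
  by move=> t s /=; rewrite (qfW4x _ _ _ _ _ _ _ _ E) /wf /QF /= ?(cE c) /=; ring.
have [h3 h4] : 0 <= 1 - c0 /\ (((cn c 1 1) + (cn c 2 2)) ^+ 2 + (- (cn c 1 2) + (cn c 2 1)) ^+ 2) <= (1 - c0) ^+ 2.
  apply: (@block_from_psd rho (fun t s => vec4 (- (cn c 1 1 * t) - (cn c 2 2 * t) + (s)) ((cn c 1 2 * t) - (cn c 2 1 * t)) (- (cn c 1 1 * t) - (cn c 2 2 * t) - (s)) ((cn c 1 2 * t) - (cn c 2 1 * t)) ((cn c 1 1 * t) + (cn c 2 2 * t) + (s)) (- (cn c 1 2 * t) + (cn c 2 1 * t)) ((cn c 1 1 * t) + (cn c 2 2 * t) - (s)) (- (cn c 1 2 * t) + (cn c 2 1 * t))) _ _ 4%:R H (ltr0Sn _ _) (sqs _ _)).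
  by move=> t s /=; rewrite (qfW4x _ _ _ _ _ _ _ _ E) /wf /QF /= ?(cE c) /=; ring.
split; first by split => //; apply: sqs.
- exact: h4.
- by rewrite sum9 /wf /= ?(cE c) /=; ring.
- move=> x; rewrite det3 /mn !in3_0 !in3_1 !in3_2 /Smx !mxE !sum3 !mxE /wf /= ?(cE c) /=; ring.
- move=> hc hs hd.
  have hT : (cn c 1 1) ^+ 2 + (cn c 1 2) ^+ 2 + (cn c 2 1) ^+ 2 + (cn c 2 2) ^+ 2 = 2%:R.
    have : 2%:R * (((- (cn c 1 1) + (cn c 2 2)) ^+ 2 + (- (cn c 1 2) - (cn c 2 1)) ^+ 2) + (((cn c 1 1) + (cn c 2 2)) ^+ 2 + (- (cn c 1 2) + (cn c 2 1)) ^+ 2)) = 4%:R * ((cn c 1 1) ^+ 2 + (cn c 1 2) ^+ 2 + (cn c 2 1) ^+ 2 + (cn c 2 2) ^+ 2) by ring.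
    rewrite hs => e; lra.
  have hD : ((cn c 1 1) * (cn c 2 2) - (cn c 1 2) * (cn c 2 1)) ^+ 2 = 1.
    have : (((- (cn c 1 1) + (cn c 2 2)) ^+ 2 + (- (cn c 1 2) - (cn c 2 1)) ^+ 2) - (((cn c 1 1) + (cn c 2 2)) ^+ 2 + (- (cn c 1 2) + (cn c 2 1)) ^+ 2)) ^+ 2 = 16%:R * ((cn c 1 1) * (cn c 2 2) - (cn c 1 2) * (cn c 2 1)) ^+ 2 by ring.
    rewrite hd => e; lra.
  have [o1 o2 o3] := orth2 hT hD.
  apply/matrixP => i j; rewrite /Smx !mxE sum3 !mxE.
  by case: (ord3_cases i) => [->|[->|->]]; case: (ord3_cases j) => [->|[->|->]]; rewrite /wf /= ?(cE c) /=; lra.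
Qed.

Lemma case_0_1 c0 (c : 'I_3 -> 'I_3 -> R) rho :
  rho = rhoW (wf i0 i1 c0 c) -> (forall v, 0 <= qf v rho) ->
  facts (wf i0 i1 c0 c) c0 (((cn c 1 0) + (cn c 2 2)) ^+ 2 + (- (cn c 1 2) + (cn c 2 0)) ^+ 2) ((- (cn c 1 0) + (cn c 2 2)) ^+ 2 + (- (cn c 1 2) - (cn c 2 0)) ^+ 2).
Proof.
move=> E H.
have [h1 h2] : 0 <= 1 + c0 /\ (((cn c 1 0) + (cn c 2 2)) ^+ 2 + (- (cn c 1 2) + (cn c 2 0)) ^+ 2) <= (1 + c0) ^+ 2.
  apply: (@block_from_psd rho (fun t s => vec4 (- (cn c 1 0 * t) - (cn c 2 2 * t) + (s)) ((cn c 1 2 * t) - (cn c 2 0 * t)) ((cn c 1 2 * t) - (cn c 2 0 * t)) ((cn c 1 0 * t) + (cn c 2 2 * t) + (s)) ((cn c 1 0 * t) + (cn c 2 2 * t) + (s)) (- (cn c 1 2 * t) + (cn c 2 0 * t)) (- (cn c 1 2 * t) + (cn c 2 0 * t)) (- (cn c 1 0 * t) - (cn c 2 2 * t) + (s))) _ _ 4%:R H (ltr0Sn _ _) (sqs _ _)).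
  by move=> t s /=; rewrite (qfW4x _ _ _ _ _ _ _ _ E) /wf /QF /= ?(cE c) /=; ring.
have [h3 h4] : 0 <= 1 - c0 /\ ((- (cn c 1 0) + (cn c 2 2)) ^+ 2 + (- (cn c 1 2) - (cn c 2 0)) ^+ 2) <= (1 - c0) ^+ 2.
  apply: (@block_from_psd rho (fun t s => vec4 ((cn c 1 0 * t) - (cn c 2 2 * t) + (s)) ((cn c 1 2 * t) + (cn c 2 0 * t)) (- (cn c 1 2 * t) - (cn c 2 0 * t)) ((cn c 1 0 * t) - (cn c 2 2 * t) - (s)) (- (cn c 1 0 * t) + (cn c 2 2 * t) + (s)) (- (cn c 1 2 * t) - (cn c 2 0 * t)) ((cn c 1 2 * t) + (cn c 2 0 * t)) (- (cn c 1 0 * t) + (cn c 2 2 * t) - (s))) _ _ 4%:R H (ltr0Sn _ _) (sqs _ _)).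
  by move=> t s /=; rewrite (qfW4x _ _ _ _ _ _ _ _ E) /wf /QF /= ?(cE c) /=; ring.
split; first by split => //; apply: sqs.
- exact: h4.
- by rewrite sum9 /wf /= ?(cE c) /=; ring.
- move=> x; rewrite det3 /mn !in3_0 !in3_1 !in3_2 /Smx !mxE !sum3 !mxE /wf /= ?(cE c) /=; ring.
- move=> hc hs hd.
  have hT : (cn c 1 0) ^+ 2 + (cn c 1 2) ^+ 2 + (cn c 2 0) ^+ 2 + (cn c 2 2) ^+ 2 = 2%:R.
    have : 2%:R * ((((cn c 1 0) + (cn c 2 2)) ^+ 2 + (- (cn c 1 2) + (cn c 2 0)) ^+ 2) + ((- (cn c 1 0) + (cn c 2 2)) ^+ 2 + (- (cn c 1 2) - (cn c 2 0)) ^+ 2)) = 4%:R * ((cn c 1 0) ^+ 2 + (cn c 1 2) ^+ 2 + (cn c 2 0) ^+ 2 + (cn c 2 2) ^+ 2) by ring.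
    rewrite hs => e; lra.
  have hD : ((cn c 1 0) * (cn c 2 2) - (cn c 1 2) * (cn c 2 0)) ^+ 2 = 1.
    have : ((((cn c 1 0) + (cn c 2 2)) ^+ 2 + (- (cn c 1 2) + (cn c 2 0)) ^+ 2) - ((- (cn c 1 0) + (cn c 2 2)) ^+ 2 + (- (cn c 1 2) - (cn c 2 0)) ^+ 2)) ^+ 2 = 16%:R * ((cn c 1 0) * (cn c 2 2) - (cn c 1 2) * (cn c 2 0)) ^+ 2 by ring.
    rewrite hd => e; lra.
  have [o1 o2 o3] := orth2 hT hD.
  apply/matrixP => i j; rewrite /Smx !mxE sum3 !mxE.
  by case: (ord3_cases i) => [->|[->|->]]; case: (ord3_cases j) => [->|[->|->]]; rewrite /wf /= ?(cE c) /=; lra.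
Qed.

Lemma case_0_2 c0 (c : 'I_3 -> 'I_3 -> R) rho :
  rho = rhoW (wf i0 i2 c0 c) -> (forall v, 0 <= qf v rho) ->
  facts (wf i0 i2 c0 c) c0 (((cn c 1 1) + (cn c 2 0)) ^+ 2 + (- (cn c 1 0) + (cn c 2 1)) ^+ 2) ((- (cn c 1 1) + (cn c 2 0)) ^+ 2 + (- (cn c 1 0) - (cn c 2 1)) ^+ 2).
Proof.
move=> E H.
have [h1 h2] : 0 <= 1 + c0 /\ (((cn c 1 1) + (cn c 2 0)) ^+ 2 + (- (cn c 1 0) + (cn c 2 1)) ^+ 2) <= (1 + c0) ^+ 2.
  apply: (@block_from_psd rho (fun t s => vec4 ((s)) 0 (- (cn c 1 1 * t) - (cn c 2 0 * t)) ((cn c 1 0 * t) - (cn c 2 1 * t)) ((s)) 0 ((cn c 1 1 * t) + (cn c 2 0 * t)) (- (cn c 1 0 * t) + (cn c 2 1 * t))) _ _ 2%:R H (ltr0Sn _ _) (sqs _ _)).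
  by move=> t s /=; rewrite (qfW4x _ _ _ _ _ _ _ _ E) /wf /QF /= ?(cE c) /=; ring.
have [h3 h4] : 0 <= 1 - c0 /\ ((- (cn c 1 1) + (cn c 2 0)) ^+ 2 + (- (cn c 1 0) - (cn c 2 1)) ^+ 2) <= (1 - c0) ^+ 2.
  apply: (@block_from_psd rho (fun t s => vec4 ((cn c 1 1 * t) - (cn c 2 0 * t)) ((cn c 1 0 * t) + (cn c 2 1 * t)) ((s)) 0 (- (cn c 1 1 * t) + (cn c 2 0 * t)) (- (cn c 1 0 * t) - (cn c 2 1 * t)) ((s)) 0) _ _ 2%:R H (ltr0Sn _ _) (sqs _ _)).
  by move=> t s /=; rewrite (qfW4x _ _ _ _ _ _ _ _ E) /wf /QF /= ?(cE c) /=; ring.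
split; first by split => //; apply: sqs.
- exact: h4.
- by rewrite sum9 /wf /= ?(cE c) /=; ring.
- move=> x; rewrite det3 /mn !in3_0 !in3_1 !in3_2 /Smx !mxE !sum3 !mxE /wf /= ?(cE c) /=; ring.
- move=> hc hs hd.
  have hT : (cn c 1 0) ^+ 2 + (cn c 1 1) ^+ 2 + (cn c 2 0) ^+ 2 + (cn c 2 1) ^+ 2 = 2%:R.
    have : 2%:R * ((((cn c 1 1) + (cn c 2 0)) ^+ 2 + (- (cn c 1 0) + (cn c 2 1)) ^+ 2) + ((- (cn c 1 1) + (cn c 2 0)) ^+ 2 + (- (cn c 1 0) - (cn c 2 1)) ^+ 2)) = 4%:R * ((cn c 1 0) ^+ 2 + (cn c 1 1) ^+ 2 + (cn c 2 0) ^+ 2 + (cn c 2 1) ^+ 2) by ring.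
    rewrite hs => e; lra.
  have hD : ((cn c 1 0) * (cn c 2 1) - (cn c 1 1) * (cn c 2 0)) ^+ 2 = 1.
    have : ((((cn c 1 1) + (cn c 2 0)) ^+ 2 + (- (cn c 1 0) + (cn c 2 1)) ^+ 2) - ((- (cn c 1 1) + (cn c 2 0)) ^+ 2 + (- (cn c 1 0) - (cn c 2 1)) ^+ 2)) ^+ 2 = 16%:R * ((cn c 1 0) * (cn c 2 1) - (cn c 1 1) * (cn c 2 0)) ^+ 2 by ring.
    rewrite hd => e; lra.
  have [o1 o2 o3] := orth2 hT hD.
  apply/matrixP => i j; rewrite /Smx !mxE sum3 !mxE.
  by case: (ord3_cases i) => [->|[->|->]]; case: (ord3_cases j) => [->|[->|->]]; rewrite /wf /= ?(cE c) /=; lra.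
Qed.

Lemma case_1_0 c0 (c : 'I_3 -> 'I_3 -> R) rho :
  rho = rhoW (wf i1 i0 c0 c) -> (forall v, 0 <= qf v rho) ->
  facts (wf i1 i0 c0 c) c0 (((cn c 0 1) + (cn c 2 2)) ^+ 2 + ((cn c 0 2) - (cn c 2 1)) ^+ 2) ((- (cn c 0 1) + (cn c 2 2)) ^+ 2 + ((cn c 0 2) + (cn c 2 1)) ^+ 2).
Proof.
move=> E H.
have [h1 h2] : 0 <= 1 + c0 /\ (((cn c 0 1) + (cn c 2 2)) ^+ 2 + ((cn c 0 2) - (cn c 2 1)) ^+ 2) <= (1 + c0) ^+ 2.
  apply: (@block_from_psd rho (fun t s => vec4 (- (cn c 0 1 * t) - (cn c 2 2 * t) + (s)) (- (cn c 0 2 * t) + (cn c 2 1 * t)) ((cn c 0 1 * t) + (cn c 2 2 * t) + (s)) ((cn c 0 2 * t) - (cn c 2 1 * t)) (- (cn c 0 2 * t) + (cn c 2 1 * t)) ((cn c 0 1 * t) + (cn c 2 2 * t) + (s)) ((cn c 0 2 * t) - (cn c 2 1 * t)) (- (cn c 0 1 * t) - (cn c 2 2 * t) + (s))) _ _ 4%:R H (ltr0Sn _ _) (sqs _ _)).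
  by move=> t s /=; rewrite (qfW4x _ _ _ _ _ _ _ _ E) /wf /QF /= ?(cE c) /=; ring.
have [h3 h4] : 0 <= 1 - c0 /\ ((- (cn c 0 1) + (cn c 2 2)) ^+ 2 + ((cn c 0 2) + (cn c 2 1)) ^+ 2) <= (1 - c0) ^+ 2.
  apply: (@block_from_psd rho (fun t s => vec4 ((cn c 0 1 * t) - (cn c 2 2 * t) + (s)) (- (cn c 0 2 * t) - (cn c 2 1 * t)) ((cn c 0 1 * t) - (cn c 2 2 * t) - (s)) (- (cn c 0 2 * t) - (cn c 2 1 * t)) (- (cn c 0 2 * t) - (cn c 2 1 * t)) (- (cn c 0 1 * t) + (cn c 2 2 * t) + (s)) (- (cn c 0 2 * t) - (cn c 2 1 * t)) (- (cn c 0 1 * t) + (cn c 2 2 * t) - (s))) _ _ 4%:R H (ltr0Sn _ _) (sqs _ _)).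
  by move=> t s /=; rewrite (qfW4x _ _ _ _ _ _ _ _ E) /wf /QF /= ?(cE c) /=; ring.
split; first by split => //; apply: sqs.
- exact: h4.
- by rewrite sum9 /wf /= ?(cE c) /=; ring.
- move=> x; rewrite det3 /mn !in3_0 !in3_1 !in3_2 /Smx !mxE !sum3 !mxE /wf /= ?(cE c) /=; ring.
- move=> hc hs hd.
  have hT : (cn c 0 1) ^+ 2 + (cn c 0 2) ^+ 2 + (cn c 2 1) ^+ 2 + (cn c 2 2) ^+ 2 = 2%:R.
    have : 2%:R * ((((cn c 0 1) + (cn c 2 2)) ^+ 2 + ((cn c 0 2) - (cn c 2 1)) ^+ 2) + ((- (cn c 0 1) + (cn c 2 2)) ^+ 2 + ((cn c 0 2) + (cn c 2 1)) ^+ 2)) = 4%:R * ((cn c 0 1) ^+ 2 + (cn c 0 2) ^+ 2 + (cn c 2 1) ^+ 2 + (cn c 2 2) ^+ 2) by ring.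
    rewrite hs => e; lra.
  have hD : ((cn c 0 1) * (cn c 2 2) - (cn c 0 2) * (cn c 2 1)) ^+ 2 = 1.
    have : ((((cn c 0 1) + (cn c 2 2)) ^+ 2 + ((cn c 0 2) - (cn c 2 1)) ^+ 2) - ((- (cn c 0 1) + (cn c 2 2)) ^+ 2 + ((cn c 0 2) + (cn c 2 1)) ^+ 2)) ^+ 2 = 16%:R * ((cn c 0 1) * (cn c 2 2) - (cn c 0 2) * (cn c 2 1)) ^+ 2 by ring.
    rewrite hd => e; lra.
  have [o1 o2 o3] := orth2 hT hD.
  apply/matrixP => i j; rewrite /Smx !mxE sum3 !mxE.
  by case: (ord3_cases i) => [->|[->|->]]; case: (ord3_cases j) => [->|[->|->]]; rewrite /wf /= ?(cE c) /=; lra.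
Qed.

Lemma case_1_1 c0 (c : 'I_3 -> 'I_3 -> R) rho :
  rho = rhoW (wf i1 i1 c0 c) -> (forall v, 0 <= qf v rho) ->
  facts (wf i1 i1 c0 c) c0 ((- (cn c 0 0) + (cn c 2 2)) ^+ 2 + ((cn c 0 2) + (cn c 2 0)) ^+ 2) (((cn c 0 0) + (cn c 2 2)) ^+ 2 + ((cn c 0 2) - (cn c 2 0)) ^+ 2).
Proof.
move=> E H.
have [h1 h2] : 0 <= 1 + c0 /\ ((- (cn c 0 0) + (cn c 2 2)) ^+ 2 + ((cn c 0 2) + (cn c 2 0)) ^+ 2) <= (1 + c0) ^+ 2.
  apply: (@block_from_psd rho (fun t s => vec4 ((cn c 0 0 * t) - (cn c 2 2 * t) + (s)) (- (cn c 0 2 * t) - (cn c 2 0 * t)) (- (cn c 0 2 * t) - (cn c 2 0 * t)) (- (cn c 0 0 * t) + (cn c 2 2 * t) + (s)) (- (cn c 0 2 * t) - (cn c 2 0 * t)) (- (cn c 0 0 * t) + (cn c 2 2 * t) + (s)) (- (cn c 0 0 * t) + (cn c 2 2 * t) - (s)) ((cn c 0 2 * t) + (cn c 2 0 * t))) _ _ 4%:R H (ltr0Sn _ _) (sqs _ _)).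
  by move=> t s /=; rewrite (qfW4x _ _ _ _ _ _ _ _ E) /wf /QF /= ?(cE c) /=; ring.
have [h3 h4] : 0 <= 1 - c0 /\ (((cn c 0 0) + (cn c 2 2)) ^+ 2 + ((cn c 0 2) - (cn c 2 0)) ^+ 2) <= (1 - c0) ^+ 2.
  apply: (@block_from_psd rho (fun t s => vec4 (- (cn c 0 0 * t) - (cn c 2 2 * t) + (s)) (- (cn c 0 2 * t) + (cn c 2 0 * t)) ((cn c 0 2 * t) - (cn c 2 0 * t)) (- (cn c 0 0 * t) - (cn c 2 2 * t) - (s)) (- (cn c 0 2 * t) + (cn c 2 0 * t)) ((cn c 0 0 * t) + (cn c 2 2 * t) + (s)) (- (cn c 0 0 * t) - (cn c 2 2 * t) + (s)) (- (cn c 0 2 * t) + (cn c 2 0 * t))) _ _ 4%:R H (ltr0Sn _ _) (sqs _ _)).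
  by move=> t s /=; rewrite (qfW4x _ _ _ _ _ _ _ _ E) /wf /QF /= ?(cE c) /=; ring.
split; first by split => //; apply: sqs.
- exact: h4.
- by rewrite sum9 /wf /= ?(cE c) /=; ring.
- move=> x; rewrite det3 /mn !in3_0 !in3_1 !in3_2 /Smx !mxE !sum3 !mxE /wf /= ?(cE c) /=; ring.
- move=> hc hs hd.
  have hT : (cn c 0 0) ^+ 2 + (cn c 0 2) ^+ 2 + (cn c 2 0) ^+ 2 + (cn c 2 2) ^+ 2 = 2%:R.
    have : 2%:R * (((- (cn c 0 0) + (cn c 2 2)) ^+ 2 + ((cn c 0 2) + (cn c 2 0)) ^+ 2) + (((cn c 0 0) + (cn c 2 2)) ^+ 2 + ((cn c 0 2) - (cn c 2 0)) ^+ 2)) = 4%:R * ((cn c 0 0) ^+ 2 + (cn c 0 2) ^+ 2 + (cn c 2 0) ^+ 2 + (cn c 2 2) ^+ 2) by ring.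
    rewrite hs => e; lra.
  have hD : ((cn c 0 0) * (cn c 2 2) - (cn c 0 2) * (cn c 2 0)) ^+ 2 = 1.
    have : (((- (cn c 0 0) + (cn c 2 2)) ^+ 2 + ((cn c 0 2) + (cn c 2 0)) ^+ 2) - (((cn c 0 0) + (cn c 2 2)) ^+ 2 + ((cn c 0 2) - (cn c 2 0)) ^+ 2)) ^+ 2 = 16%:R * ((cn c 0 0) * (cn c 2 2) - (cn c 0 2) * (cn c 2 0)) ^+ 2 by ring.
    rewrite hd => e; lra.
  have [o1 o2 o3] := orth2 hT hD.
  apply/matrixP => i j; rewrite /Smx !mxE sum3 !mxE.
  by case: (ord3_cases i) => [->|[->|->]]; case: (ord3_cases j) => [->|[->|->]]; rewrite /wf /= ?(cE c) /=; lra.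
Qed.

Lemma case_1_2 c0 (c : 'I_3 -> 'I_3 -> R) rho :
  rho = rhoW (wf i1 i2 c0 c) -> (forall v, 0 <= qf v rho) ->
  facts (wf i1 i2 c0 c) c0 ((- (cn c 0 1) + (cn c 2 0)) ^+ 2 + ((cn c 0 0) + (cn c 2 1)) ^+ 2) (((cn c 0 1) + (cn c 2 0)) ^+ 2 + ((cn c 0 0) - (cn c 2 1)) ^+ 2).
Proof.
move=> E H.
have [h1 h2] : 0 <= 1 + c0 /\ ((- (cn c 0 1) + (cn c 2 0)) ^+ 2 + ((cn c 0 0) + (cn c 2 1)) ^+ 2) <= (1 + c0) ^+ 2.
  apply: (@block_from_psd rho (fun t s => vec4 ((s)) 0 ((cn c 0 1 * t) - (cn c 2 0 * t)) (- (cn c 0 0 * t) - (cn c 2 1 * t)) 0 ((s)) (- (cn c 0 0 * t) - (cn c 2 1 * t)) (- (cn c 0 1 * t) + (cn c 2 0 * t))) _ _ 2%:R H (ltr0Sn _ _) (sqs _ _)).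
  by move=> t s /=; rewrite (qfW4x _ _ _ _ _ _ _ _ E) /wf /QF /= ?(cE c) /=; ring.
have [h3 h4] : 0 <= 1 - c0 /\ (((cn c 0 1) + (cn c 2 0)) ^+ 2 + ((cn c 0 0) - (cn c 2 1)) ^+ 2) <= (1 - c0) ^+ 2.
  apply: (@block_from_psd rho (fun t s => vec4 (- (cn c 0 1 * t) - (cn c 2 0 * t)) (- (cn c 0 0 * t) + (cn c 2 1 * t)) ((s)) 0 (- (cn c 0 0 * t) + (cn c 2 1 * t)) ((cn c 0 1 * t) + (cn c 2 0 * t)) 0 ((s))) _ _ 2%:R H (ltr0Sn _ _) (sqs _ _)).
  by move=> t s /=; rewrite (qfW4x _ _ _ _ _ _ _ _ E) /wf /QF /= ?(cE c) /=; ring.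
split; first by split => //; apply: sqs.
- exact: h4.
- by rewrite sum9 /wf /= ?(cE c) /=; ring.
- move=> x; rewrite det3 /mn !in3_0 !in3_1 !in3_2 /Smx !mxE !sum3 !mxE /wf /= ?(cE c) /=; ring.
- move=> hc hs hd.
  have hT : (cn c 0 0) ^+ 2 + (cn c 0 1) ^+ 2 + (cn c 2 0) ^+ 2 + (cn c 2 1) ^+ 2 = 2%:R.
    have : 2%:R * (((- (cn c 0 1) + (cn c 2 0)) ^+ 2 + ((cn c 0 0) + (cn c 2 1)) ^+ 2) + (((cn c 0 1) + (cn c 2 0)) ^+ 2 + ((cn c 0 0) - (cn c 2 1)) ^+ 2)) = 4%:R * ((cn c 0 0) ^+ 2 + (cn c 0 1) ^+ 2 + (cn c 2 0) ^+ 2 + (cn c 2 1) ^+ 2) by ring.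
    rewrite hs => e; lra.
  have hD : ((cn c 0 0) * (cn c 2 1) - (cn c 0 1) * (cn c 2 0)) ^+ 2 = 1.
    have : (((- (cn c 0 1) + (cn c 2 0)) ^+ 2 + ((cn c 0 0) + (cn c 2 1)) ^+ 2) - (((cn c 0 1) + (cn c 2 0)) ^+ 2 + ((cn c 0 0) - (cn c 2 1)) ^+ 2)) ^+ 2 = 16%:R * ((cn c 0 0) * (cn c 2 1) - (cn c 0 1) * (cn c 2 0)) ^+ 2 by ring.
    rewrite hd => e; lra.
  have [o1 o2 o3] := orth2 hT hD.
  apply/matrixP => i j; rewrite /Smx !mxE sum3 !mxE.
  by case: (ord3_cases i) => [->|[->|->]]; case: (ord3_cases j) => [->|[->|->]]; rewrite /wf /= ?(cE c) /=; lra.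
Qed.

Lemma case_2_0 c0 (c : 'I_3 -> 'I_3 -> R) rho :
  rho = rhoW (wf i2 i0 c0 c) -> (forall v, 0 <= qf v rho) ->
  facts (wf i2 i0 c0 c) c0 (((cn c 0 2) + (cn c 1 1)) ^+ 2 + (- (cn c 0 1) + (cn c 1 2)) ^+ 2) (((cn c 0 2) - (cn c 1 1)) ^+ 2 + ((cn c 0 1) + (cn c 1 2)) ^+ 2).
Proof.
move=> E H.
have [h1 h2] : 0 <= 1 + c0 /\ (((cn c 0 2) + (cn c 1 1)) ^+ 2 + (- (cn c 0 1) + (cn c 1 2)) ^+ 2) <= (1 + c0) ^+ 2.
  apply: (@block_from_psd rho (fun t s => vec4 ((s)) 0 ((s)) 0 (- (cn c 0 2 * t) - (cn c 1 1 * t)) ((cn c 0 1 * t) - (cn c 1 2 * t)) ((cn c 0 2 * t) + (cn c 1 1 * t)) (- (cn c 0 1 * t) + (cn c 1 2 * t))) _ _ 2%:R H (ltr0Sn _ _) (sqs _ _)).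
  by move=> t s /=; rewrite (qfW4x _ _ _ _ _ _ _ _ E) /wf /QF /= ?(cE c) /=; ring.
have [h3 h4] : 0 <= 1 - c0 /\ (((cn c 0 2) - (cn c 1 1)) ^+ 2 + ((cn c 0 1) + (cn c 1 2)) ^+ 2) <= (1 - c0) ^+ 2.
  apply: (@block_from_psd rho (fun t s => vec4 ((s)) 0 (- (s)) 0 (- (cn c 0 2 * t) + (cn c 1 1 * t)) (- (cn c 0 1 * t) - (cn c 1 2 * t)) (- (cn c 0 2 * t) + (cn c 1 1 * t)) (- (cn c 0 1 * t) - (cn c 1 2 * t))) _ _ 2%:R H (ltr0Sn _ _) (sqs _ _)).
  by move=> t s /=; rewrite (qfW4x _ _ _ _ _ _ _ _ E) /wf /QF /= ?(cE c) /=; ring.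
split; first by split => //; apply: sqs.
- exact: h4.
- by rewrite sum9 /wf /= ?(cE c) /=; ring.
- move=> x; rewrite det3 /mn !in3_0 !in3_1 !in3_2 /Smx !mxE !sum3 !mxE /wf /= ?(cE c) /=; ring.
- move=> hc hs hd.
  have hT : (cn c 0 1) ^+ 2 + (cn c 0 2) ^+ 2 + (cn c 1 1) ^+ 2 + (cn c 1 2) ^+ 2 = 2%:R.
    have : 2%:R * ((((cn c 0 2) + (cn c 1 1)) ^+ 2 + (- (cn c 0 1) + (cn c 1 2)) ^+ 2) + (((cn c 0 2) - (cn c 1 1)) ^+ 2 + ((cn c 0 1) + (cn c 1 2)) ^+ 2)) = 4%:R * ((cn c 0 1) ^+ 2 + (cn c 0 2) ^+ 2 + (cn c 1 1) ^+ 2 + (cn c 1 2) ^+ 2) by ring.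
    rewrite hs => e; lra.
  have hD : ((cn c 0 1) * (cn c 1 2) - (cn c 0 2) * (cn c 1 1)) ^+ 2 = 1.
    have : ((((cn c 0 2) + (cn c 1 1)) ^+ 2 + (- (cn c 0 1) + (cn c 1 2)) ^+ 2) - (((cn c 0 2) - (cn c 1 1)) ^+ 2 + ((cn c 0 1) + (cn c 1 2)) ^+ 2)) ^+ 2 = 16%:R * ((cn c 0 1) * (cn c 1 2) - (cn c 0 2) * (cn c 1 1)) ^+ 2 by ring.
    rewrite hd => e; lra.
  have [o1 o2 o3] := orth2 hT hD.
  apply/matrixP => i j; rewrite /Smx !mxE sum3 !mxE.
  by case: (ord3_cases i) => [->|[->|->]]; case: (ord3_cases j) => [->|[->|->]]; rewrite /wf /= ?(cE c) /=; lra.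
Qed.

Lemma case_2_1 c0 (c : 'I_3 -> 'I_3 -> R) rho :
  rho = rhoW (wf i2 i1 c0 c) -> (forall v, 0 <= qf v rho) ->
  facts (wf i2 i1 c0 c) c0 (((cn c 0 2) - (cn c 1 0)) ^+ 2 + ((cn c 0 0) + (cn c 1 2)) ^+ 2) (((cn c 0 2) + (cn c 1 0)) ^+ 2 + (- (cn c 0 0) + (cn c 1 2)) ^+ 2).
Proof.
move=> E H.
have [h1 h2] : 0 <= 1 + c0 /\ (((cn c 0 2) - (cn c 1 0)) ^+ 2 + ((cn c 0 0) + (cn c 1 2)) ^+ 2) <= (1 + c0) ^+ 2.
  apply: (@block_from_psd rho (fun t s => vec4 ((s)) 0 0 ((s)) (- (cn c 0 2 * t) + (cn c 1 0 * t)) (- (cn c 0 0 * t) - (cn c 1 2 * t)) (- (cn c 0 0 * t) - (cn c 1 2 * t)) ((cn c 0 2 * t) - (cn c 1 0 * t))) _ _ 2%:R H (ltr0Sn _ _) (sqs _ _)).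
  by move=> t s /=; rewrite (qfW4x _ _ _ _ _ _ _ _ E) /wf /QF /= ?(cE c) /=; ring.
have [h3 h4] : 0 <= 1 - c0 /\ (((cn c 0 2) + (cn c 1 0)) ^+ 2 + (- (cn c 0 0) + (cn c 1 2)) ^+ 2) <= (1 - c0) ^+ 2.
  apply: (@block_from_psd rho (fun t s => vec4 ((s)) 0 0 (- (s)) (- (cn c 0 2 * t) - (cn c 1 0 * t)) ((cn c 0 0 * t) - (cn c 1 2 * t)) (- (cn c 0 0 * t) + (cn c 1 2 * t)) (- (cn c 0 2 * t) - (cn c 1 0 * t))) _ _ 2%:R H (ltr0Sn _ _) (sqs _ _)).
  by move=> t s /=; rewrite (qfW4x _ _ _ _ _ _ _ _ E) /wf /QF /= ?(cE c) /=; ring.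
split; first by split => //; apply: sqs.
- exact: h4.
- by rewrite sum9 /wf /= ?(cE c) /=; ring.
- move=> x; rewrite det3 /mn !in3_0 !in3_1 !in3_2 /Smx !mxE !sum3 !mxE /wf /= ?(cE c) /=; ring.
- move=> hc hs hd.
  have hT : (cn c 0 0) ^+ 2 + (cn c 0 2) ^+ 2 + (cn c 1 0) ^+ 2 + (cn c 1 2) ^+ 2 = 2%:R.
    have : 2%:R * ((((cn c 0 2) - (cn c 1 0)) ^+ 2 + ((cn c 0 0) + (cn c 1 2)) ^+ 2) + (((cn c 0 2) + (cn c 1 0)) ^+ 2 + (- (cn c 0 0) + (cn c 1 2)) ^+ 2)) = 4%:R * ((cn c 0 0) ^+ 2 + (cn c 0 2) ^+ 2 + (cn c 1 0) ^+ 2 + (cn c 1 2) ^+ 2) by ring.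
    rewrite hs => e; lra.
  have hD : ((cn c 0 0) * (cn c 1 2) - (cn c 0 2) * (cn c 1 0)) ^+ 2 = 1.
    have : ((((cn c 0 2) - (cn c 1 0)) ^+ 2 + ((cn c 0 0) + (cn c 1 2)) ^+ 2) - (((cn c 0 2) + (cn c 1 0)) ^+ 2 + (- (cn c 0 0) + (cn c 1 2)) ^+ 2)) ^+ 2 = 16%:R * ((cn c 0 0) * (cn c 1 2) - (cn c 0 2) * (cn c 1 0)) ^+ 2 by ring.
    rewrite hd => e; lra.
  have [o1 o2 o3] := orth2 hT hD.
  apply/matrixP => i j; rewrite /Smx !mxE sum3 !mxE.
  by case: (ord3_cases i) => [->|[->|->]]; case: (ord3_cases j) => [->|[->|->]]; rewrite /wf /= ?(cE c) /=; lra.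
Qed.

Lemma case_2_2 c0 (c : 'I_3 -> 'I_3 -> R) rho :
  rho = rhoW (wf i2 i2 c0 c) -> (forall v, 0 <= qf v rho) ->
  facts (wf i2 i2 c0 c) c0 (((cn c 0 0) - (cn c 1 1)) ^+ 2 + ((cn c 0 1) + (cn c 1 0)) ^+ 2) (((cn c 0 0) + (cn c 1 1)) ^+ 2 + (- (cn c 0 1) + (cn c 1 0)) ^+ 2).
Proof.
move=> E H.
have [h1 h2] : 0 <= 1 + c0 /\ (((cn c 0 0) - (cn c 1 1)) ^+ 2 + ((cn c 0 1) + (cn c 1 0)) ^+ 2) <= (1 + c0) ^+ 2.
  apply: (@block_from_psd rho (fun t s => vec4 ((s)) 0 0 0 0 0 (- (cn c 0 0 * t) + (cn c 1 1 * t)) (- (cn c 0 1 * t) - (cn c 1 0 * t))) _ _ 1%:R H (ltr0Sn _ _) (sqs _ _)).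
  by move=> t s /=; rewrite (qfW4x _ _ _ _ _ _ _ _ E) /wf /QF /= ?(cE c) /=; ring.
have [h3 h4] : 0 <= 1 - c0 /\ (((cn c 0 0) + (cn c 1 1)) ^+ 2 + (- (cn c 0 1) + (cn c 1 0)) ^+ 2) <= (1 - c0) ^+ 2.
  apply: (@block_from_psd rho (fun t s => vec4 0 0 ((s)) 0 (- (cn c 0 0 * t) - (cn c 1 1 * t)) ((cn c 0 1 * t) - (cn c 1 0 * t)) 0 0) _ _ 1%:R H (ltr0Sn _ _) (sqs _ _)).
  by move=> t s /=; rewrite (qfW4x _ _ _ _ _ _ _ _ E) /wf /QF /= ?(cE c) /=; ring.
split; first by split => //; apply: sqs.
- exact: h4.
- by rewrite sum9 /wf /= ?(cE c) /=; ring.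
- move=> x; rewrite det3 /mn !in3_0 !in3_1 !in3_2 /Smx !mxE !sum3 !mxE /wf /= ?(cE c) /=; ring.
- move=> hc hs hd.
  have hT : (cn c 0 0) ^+ 2 + (cn c 0 1) ^+ 2 + (cn c 1 0) ^+ 2 + (cn c 1 1) ^+ 2 = 2%:R.
    have : 2%:R * ((((cn c 0 0) - (cn c 1 1)) ^+ 2 + ((cn c 0 1) + (cn c 1 0)) ^+ 2) + (((cn c 0 0) + (cn c 1 1)) ^+ 2 + (- (cn c 0 1) + (cn c 1 0)) ^+ 2)) = 4%:R * ((cn c 0 0) ^+ 2 + (cn c 0 1) ^+ 2 + (cn c 1 0) ^+ 2 + (cn c 1 1) ^+ 2) by ring.
    rewrite hs => e; lra.
  have hD : ((cn c 0 0) * (cn c 1 1) - (cn c 0 1) * (cn c 1 0)) ^+ 2 = 1.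
    have : ((((cn c 0 0) - (cn c 1 1)) ^+ 2 + ((cn c 0 1) + (cn c 1 0)) ^+ 2) - (((cn c 0 0) + (cn c 1 1)) ^+ 2 + (- (cn c 0 1) + (cn c 1 0)) ^+ 2)) ^+ 2 = 16%:R * ((cn c 0 0) * (cn c 1 1) - (cn c 0 1) * (cn c 1 0)) ^+ 2 by ring.
    rewrite hd => e; lra.
  have [o1 o2 o3] := orth2 hT hD.
  apply/matrixP => i j; rewrite /Smx !mxE sum3 !mxE.
  by case: (ord3_cases i) => [->|[->|->]]; case: (ord3_cases j) => [->|[->|->]]; rewrite /wf /= ?(cE c) /=; lra.
Qed.

Lemma case_facts A B c0 (c : 'I_3 -> 'I_3 -> R) rho :
  rho = rhoW (wf A B c0 c) -> (forall v, 0 <= qf v rho) ->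
  exists P M, facts (wf A B c0 c) c0 P M.
Proof.
move=> E H.
case: (ord3_cases A) E => [->|[->|->]] E; case: (ord3_cases B) E => [->|[->|->]] E; do 2 eexists.
- exact: case_0_0 E H.
- exact: case_0_1 E H.
- exact: case_0_2 E H.
- exact: case_1_0 E H.
- exact: case_1_1 E H.
- exact: case_1_2 E H.
- exact: case_2_0 E H.
- exact: case_2_1 E H.
- exact: case_2_2 E H.
Qed.

End C6.

Theorem proposition6 (R : rcfType) (A B : 'I_3) (c0 : R)
  (c : 'I_3 -> 'I_3 -> R) (rho : 'M[R[i]]_(2 * 2)) :
  rho = 4%:R^-1 *: (1%:M + c0%:C *: (sigma A *t sigma B)
          + \sum_(a < 3 | a != A) \sum_(b < 3 | b != B)
              (c a b)%:C *: (sigma a *t sigma b)) ->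
  density_matrix rho ->
  (horodecki_M_is rho 2 <-> \tr (rho *m rho) = 1).
Proof.
move=> Hr [Hh Htr Hpsd].
have E : rho = rhoW (wf A B c0 c).
  by rewrite Hr /rhoW -addrA (G1 A B c0 c (@Pm R)).
have H : forall v, 0 <= qf v rho by move=> v; apply: Hpsd.
have [P [M [[P0 M0 a0 b0 hP] hM hsum hdet hS]]] := case_facts E H.
have Hcorr := corrW E.
have Hpur := purW E Htr.
rewrite /horodecki_M_is Hcorr Hpur -/(Smx (wf A B c0 c)).
split.
- case=> l1 [l2 [l3 [h32 h21 Hcp Hm]]].
  have Hid : forall x, 16%:R * ((x - l1) * (x - l2) * (x - l3)) =
      (x - c0 ^+ 2) * (16%:R * x ^+ 2 - 8%:R * (P + M) * x + (P - M) ^+ 2).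
    move=> x; rewrite -hdet -char_horner Hcp !hornerE //.
  have h6 := coreB P0 M0 a0 b0 hP hM h32 h21 Hid (esym Hm).
  have S3 : \sum_a \sum_b wf A B c0 c a b ^+ 2 = 3%:R by lra.
  rewrite S3.
  have -> : (4%:R^-1 * (1 + 3%:R) : R) = 1 by field.
  by [].
- move=> Hp.
  have Hp' : (4%:R^-1 * (1 + \sum_a \sum_b wf A B c0 c a b ^+ 2) : R) = 1.
    by move: Hp => /(congr1 (@complex.Re R)).
  have S3 : \sum_a \sum_b wf A B c0 c a b ^+ 2 = 3%:R.
    have hX : forall X : R, 4%:R^-1 * X = 1 -> X = 4%:R by move=> X hx; rewrite -hx; field.
    have := hX _ Hp'; lra.
  have h6 : 2%:R * c0 ^+ 2 + P + M = 6%:R by lra.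
  have [e1 e2 e3] := coreA P0 M0 a0 b0 hP hM h6.
  rewrite (hS e1 e2 e3).
  exists 1, 1, 1; split => //.
  rewrite char_poly_trig ?scalar_mx_is_trig // !big_ord_recl big_ord0 !mxE /=.
  rewrite mulr1; ring.
Qed.
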